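(* $$\{\mathbf{M}\mathbf{X}\mathbf{M}^T:\mathbf{X}\in\mathcal{X}\cap\mathcal{H}\}=\left\{\mathbf{Y}\in\mathbb{S}^m:\ \mathrm{Tr}(\mathbf{Y})=1,\ \mathbf{Y}\succeq\tfrac14\mathbf{d}\mathbf{d}^T\text{ where }\mathbf{d}=\mathrm{diag}(\mathbf{Y})\right\}.$$
   Context: $\mathbf{e}$ is the all-ones vector, $\mathbb{S}^{k}$ the real symmetric $k\times k$ matrices, $\mathrm{diag}(\mathbf{Y})$ the vector of diagonal entries. $\mathcal{X}=\{\mathbf{X}\in\mathbb{S}^{m+1}:\mathrm{diag}(\mathbf{X})=\mathbf{e},\mathbf{X}\succeq\mathbf{0}\}$, $\mathbf{M}=[\mathbf{I}_m\ -\mathbf{e}]\in\mathbb{R}^{m\times(m+1)}$, $\mathcal{H}=\{\mathbf{X}\in\mathbb{S}^{m+1}:\mathrm{Tr}(\mathbf{M}\mathbf{X}\mathbf{M}^T)=1\}$. $\mathbf{A}\succeq\mathbf{B}$ means $\mathbf{A}-\mathbf{B}$ is positive semidefinite. *)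

(* Defs.v *)
From mathcomp Require Import all_boot all_order all_algebra.
From mathcomp Require Import reals.
Set Implicit Arguments. Unset Strict Implicit. Unset Printing Implicit Defensive.
Import Order.TTheory GRing.Theory Num.Theory.
Local Open Scope ring_scope.

Definition symmx (R : realType) (k : nat) (A : 'M[R]_k) : Prop := A^T = A.

Definition psd (R : realType) (k : nat) (A : 'M[R]_k) : Prop :=
  symmx A /\ forall x : 'cV[R]_k, 0 <= (x^T *m A *m x) 0 0.

Definition psd_ge (R : realType) (k : nat) (A B : 'M[R]_k) : Prop := psd (A - B).

Definition diagv (R : realType) (k : nat) (Y : 'M[R]_k) : 'cV[R]_k :=
  \col_i Y i i.

Definition ones (R : realType) (k : nat) : 'cV[R]_k := const_mx 1.

Definition Mmat (R : realType) (m : nat) : 'M[R]_(m, m + 1) :=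
  row_mx 1%:M (- ones R m).

Definition calX (R : realType) (m : nat) (X : 'M[R]_(m + 1)) : Prop :=
  symmx X /\ diagv X = ones R (m + 1) /\ psd X.

Definition calH (R : realType) (m : nat) (X : 'M[R]_(m + 1)) : Prop :=
  symmx X /\ \tr (Mmat R m *m X *m (Mmat R m)^T) = 1.

(* Main.v *)
Require Import Defs.
From mathcomp Require Import all_boot all_order all_algebra.
From mathcomp Require Import reals ring lra.
Import Order.TTheory GRing.Theory Num.Theory.
Local Open Scope ring_scope.

Section H.
Variable R : realType.

Lemma psd_congr n k (A : 'M[R]_n) (P : 'M[R]_(n, k)) :
  psd A -> psd (P^T *m A *m P).
Proof.
case=> sA pA; split.
  by rewrite /symmx !trmx_mul trmxK sA mulmxA.
move=> x; have := pA (P *m x).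
by rewrite trmx_mul !mulmxA.
Qed.

Lemma psd_add n (A B : 'M[R]_n) : psd A -> psd B -> psd (A + B).
Proof.
case=> sA pA [sB pB]; split; first by rewrite /symmx linearD /= sA sB.
move=> x; rewrite mulmxDr mulmxDl mxE; exact: addr_ge0.
Qed.

Lemma psd_rank1 n (w : 'cV[R]_n) : psd (w *m w^T).
Proof.
split; first by rewrite /symmx trmx_mul trmxK.
move=> x; rewrite mulmxA -mulmxA -[x^T *m w]trmxK trmx_mul trmxK.
rewrite mxE big_ord1 mxE; exact: sqr_ge0.
Qed.

Definition e m := ones R m.

Lemma compY m (Z : 'M[R]_m) (a : 'cV[R]_m) :
  Mmat R m *m block_mx Z a a^T 1%:M *m (Mmat R m)^T
  = Z - e m *m a^T - a *m (e m)^T + e m *m (e m)^T.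
Proof.
rewrite /Mmat mul_row_block tr_row_mx mul_row_col trmx1 !mul1mx !mulmx1.
rewrite linearN /= mulmxN mulmxBl !mulNmx /e.
by rewrite opprD opprK addrA.
Qed.

Lemma compS m (Z : 'M[R]_m) (a : 'cV[R]_m) :
  (col_mx 1%:M (- a^T))^T *m block_mx Z a a^T 1%:M *m col_mx 1%:M (- a^T)
  = Z - a *m a^T.
Proof.
rewrite tr_col_mx trmx1 linearN /= trmxK mul_row_block mul_row_col.
rewrite !mul1mx !mulmx1 !mulNmx addrN mul0mx addr0; by [].
Qed.

End H.

Theorem lemma6 (R : realType) (m : nat) (Y : 'M[R]_m) :
  (exists X : 'M[R]_(m + 1),
      calX X /\ calH X /\ Y = Mmat R m *m X *m (Mmat R m)^T)
  <->
  (symmx Y /\ \tr Y = 1 /\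
   psd_ge Y ((4%:R)^-1 *: (diagv Y *m (diagv Y)^T))).
Proof.
split.
- move=> [X [[sX [dX pX]] [[_ trH] ->]]].
  have sY : symmx (Mmat R m *m X *m (Mmat R m)^T).
    by rewrite /symmx !trmx_mul trmxK sX mulmxA.
  set Z := ulsubmx X; set a := ursubmx X.
  have hd : forall i, X i i = 1.
    by move=> i; have := congr1 (fun v : 'cV[R]_(m+1) => v i 0) dX; rewrite !mxE.
  have eX : X = block_mx Z a a^T 1%:M.
    rewrite -{1}(submxK X); congr block_mx.
      by rewrite /a trmx_ursub sX.
    apply/matrixP => i j; rewrite !ord1 !mxE /=; exact: (hd (rshift m 0)).
  have hZ : forall i, Z i i = 1.
    move=> i; rewrite /Z /ulsubmx !mxE. exact: hd.
  do 2 (split => //).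
  rewrite /psd_ge.
  suff -> : Mmat R m *m X *m (Mmat R m)^T
     - 4%:R^-1 *: (diagv (Mmat R m *m X *m (Mmat R m)^T) *m
                    (diagv (Mmat R m *m X *m (Mmat R m)^T))^T) = Z - a *m a^T.
    by rewrite -compS -eX; exact: psd_congr.
  rewrite eX compY; apply/matrixP => i j.
  rewrite !(mxE, big_ord1) !hd.
  by field.
- move=> [sY [trY [sS pS]]].
  set d := diagv Y.
  set S := Y - 4%:R^-1 *: (d *m d^T).
  set a : 'cV[R]_m := ones R m - 2%:R^-1 *: d.
  set Z := S + a *m a^T.
  have sZ : Z^T = Z by rewrite /Z linearD /= sS trmx_mul trmxK.
  have eY : Y = Mmat R m *m block_mx Z a a^T 1%:M *m (Mmat R m)^T.
    rewrite compY; apply/matrixP => i j.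
    rewrite /Z /S /a /d !(mxE, big_ord1).
    by field.
  exists (block_mx Z a a^T 1%:M).
  have sX : symmx (block_mx Z a a^T 1%:M).
    by rewrite /symmx tr_block_mx sZ trmxK trmx1.
  split; [split; [exact: sX | split] | split; [split; [exact: sX|] |]] => //.
  + apply/matrixP => i j; rewrite ord1.
    case: (split_ordP i) => k ->.
      rewrite mxE block_mxEul /Z /S /a /d !(mxE, big_ord1).
      by field.
    by rewrite mxE block_mxEdr !mxE ord1.
  + have -> : block_mx Z a a^T 1%:M =
        (row_mx 1%:M 0)^T *m S *m row_mx 1%:M (0 : 'M[R]_(m,1))
        + col_mx a 1%:M *m (col_mx a (1%:M : 'M[R]_1))^T.
      rewrite tr_row_mx tr_col_mx trmx1 trmx0 mul_col_mx mul_col_row.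
      rewrite mul_col_row !mul1mx !mulmx1 !mul0mx !mulmx0 add_block_mx.
      by rewrite !add0r trmx1 mulmx1.
    apply: psd_add; [exact: psd_congr | exact: psd_rank1].
  + by rewrite -eY.
Qed.
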